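(* Let $\alpha\in(0,1)$, $R>0$, and for $\lambda\in[-\pi,\pi]$ let $V(\lambda)$ denote the maximal Phase-II observation time when at the contact time $t_2$ the target is on the boundary of the observation disk with relative bearing $\lambda$. Then $V$ is monotonically non-decreasing on $[-\pi,0]$, monotonically non-increasing on $[0,\pi]$, and attains its maximum at $\lambda=0$.
   Context: Target: position $(0,y_T(t))$, $\dot y_T=1$. Observer: position $(x_O(t),y_O(t))$, $\dot x_O=\alpha\cos\psi(t)$, $\dot y_O=\alpha\sin\psi(t)$, heading $\psi$ a measurable control. Contact with bearing $\lambda$ at time $t_2$ means $\big(x_O(t_2),y_O(t_2)-y_T(t_2)\big)=R(\sin\lambda,\cos\lambda)$. For a control on $[t_2,\infty)$, $t_f=\inf\{t\ge t_2: x_O(t)^2+(y_O(t)-y_T(t))^2>R^2\}$ and the observation time is $t_f-t_2$; $V(\lambda)$ is the supremum of $t_f-t_2$ over all controls. *)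

(* Defs.v *)
From HB Require Import structures.
From mathcomp Require Import all_boot all_order all_algebra.
From mathcomp Require Import all_classical all_reals all_analysis.
Set Implicit Arguments. Unset Strict Implicit. Unset Printing Implicit Defensive.
Import Order.TTheory GRing.Theory Num.Theory.
Local Open Scope classical_set_scope.
Local Open Scope ring_scope.

Section PhaseII.
Variable R : realType.

Definition obs_x (alpha x0 t2 : R) (psi : R -> R) (t : R) : R :=
  x0 + Rintegral lebesgue_measure `[t2, t] (fun s => alpha * cos (psi s)).
Definition obs_y (alpha y0 t2 : R) (psi : R -> R) (t : R) : R :=
  y0 + Rintegral lebesgue_measure `[t2, t] (fun s => alpha * sin (psi s)).

(* Target: (0, y_T(t)) with y_T(t2) = yT2 and dy_T/dt = 1. *)
Definition target_y (yT2 t2 t : R) : R := yT2 + (t - t2).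

(* Contact with bearing lam at time t2: observer at
   (R sin lam, y_T(t2) + R cos lam). t_f = inf {t >= t2 : outside disk}
   (+oo if the set is empty). *)
Definition exit_time (alpha Rr t2 yT2 lam : R) (psi : R -> R) : \bar R :=
  ereal_inf [set t%:E | t in [set t : R | t2 <= t /\
     Rr ^+ 2 < (obs_x alpha (Rr * sin lam) t2 psi t) ^+ 2
              + (obs_y alpha (yT2 + Rr * cos lam) t2 psi t - target_y yT2 t2 t) ^+ 2]].

Definition V (alpha Rr t2 yT2 lam : R) : \bar R :=
  ereal_sup [set (exit_time alpha Rr t2 yT2 lam psi - t2%:E)%E
            | psi in [set psi : R -> R | measurable_fun `[t2, +oo[ psi]].

End PhaseII.

(* Main.v *)
Require Import Defs.
From HB Require Import structures.
From mathcomp Require Import all_boot all_order all_algebra.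
From mathcomp Require Import all_classical all_reals all_analysis.
From mathcomp Require Import ring lra.
Import Order.TTheory GRing.Theory Num.Theory.
Import numFieldNormedType.Exports.
Local Open Scope ring_scope.

Section Helpers.
Local Open Scope classical_set_scope.
Variable R : realType.
Local Notation mu := (@lebesgue_measure R).

Lemma contM (a : R) (g : R -> R) : continuous g -> continuous (fun x => a * g x).
Proof. move=> cg x; apply: (@continuousM _ _ (fun=> a) g x); [exact: cvg_cst | exact: cg]. Qed.

Lemma contD (f g : R -> R) : continuous f -> continuous g -> continuous (fun x => f x + g x).
Proof. move=> cf cg x; apply: (@continuousD _ _ _ f g x); [exact: cf | exact: cg]. Qed.

Lemma itv_int (psi : R -> R) (t2 t : R) (h : R -> R) (M : R) :
  continuous h -> (forall x : R, `|h x| <= M) ->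
  measurable_fun `[t2, +oo[ psi -> t2 <= t ->
  mu.-integrable `[t2, t] (EFin \o (fun s => h (psi s))).
Proof.
move=> ch hM mpsi tt.
apply: measurable_bounded_integrable => //.
- have := @lebesgue_measure_itv R `[t2, t]%R; rewrite /= => ->.
  case: ifP => _; last exact: ltry.
  by apply: lte_add_pinfty; exact: ltry.
- apply: (measurableT_comp (f := h)); first exact: measurable_realfun.continuous_measurable_fun.
  apply: measurable_funS mpsi => //.
  by move=> x /=; rewrite !in_itv /= andbT => /andP[].
- exists M; split; first by rewrite num_real.
  by move=> N MN x _; apply: (le_trans (hM _)); rewrite ltW.
Qed.

Lemma Rint_cst t2 t (c : R) : t2 <= t ->
  Rintegral mu `[t2, t] (fun _ => c) = c * (t - t2).
Proof.
move=> tt; rewrite Rintegral_cst //.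
have := @lebesgue_measure_itv R `[t2, t]%R; rewrite /= => ->.
rewrite lte_fin; case: ltP => h /=; first by [].
have -> : t = t2 by apply/le_anti; rewrite tt h.
by rewrite subrr.
Qed.

Lemma factA (psi : R -> R) (t2 t alpha a1 a2 : R) :
  0 <= alpha -> a1 ^+ 2 + a2 ^+ 2 <= 1 ->
  measurable_fun `[t2, +oo[ psi -> t2 <= t ->
  a1 * Rintegral mu `[t2, t] (fun s => alpha * cos (psi s))
  + a2 * Rintegral mu `[t2, t] (fun s => alpha * sin (psi s))
  <= alpha * (t - t2).
Proof.
move=> a0 a12 mpsi tt.
have i1 := @itv_int psi t2 t (fun x => alpha * cos x) alpha.
have i2 := @itv_int psi t2 t (fun x => alpha * sin x) alpha.
have c1 : continuous (fun x : R => alpha * cos x).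
  exact/contM/continuous_cos.
have c2 : continuous (fun x : R => alpha * sin x).
  exact/contM/continuous_sin.
have b1 : forall x : R, `|alpha * cos x| <= alpha.
  move=> x; rewrite normrM ger0_norm // ler_piMr //.
  by rewrite -sqrtr_sqr -(@sqrtr1 R) ler_sqrt // cos2sin2 lerBlDr lerDl sqr_ge0.
have b2 : forall x : R, `|alpha * sin x| <= alpha.
  move=> x; rewrite normrM ger0_norm // ler_piMr //.
  by rewrite -sqrtr_sqr -(@sqrtr1 R) ler_sqrt // sin2cos2 lerBlDr lerDl sqr_ge0.
rewrite -!RintegralZl //; [|exact: i2|exact: i1].
rewrite -RintegralD //; last first.
- apply: (@itv_int psi t2 t (fun x => a2 * (alpha * sin x)) (`|a2| * alpha)) => //.
  + exact/contM.
  + by move=> x; rewrite normrM ler_wpM2l.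
- apply: (@itv_int psi t2 t (fun x => a1 * (alpha * cos x)) (`|a1| * alpha)) => //.
  + exact/contM.
  + by move=> x; rewrite normrM ler_wpM2l.
rewrite -Rint_cst //.
apply: le_Rintegral => //.
- apply: (@itv_int psi t2 t (fun x => a1 * (alpha * cos x) + a2 * (alpha * sin x)) (`|a1| * alpha + `|a2| * alpha)) => //.
  + by apply: contD; exact/contM.
  + by move=> x; rewrite (le_trans (ler_normD _ _)) // lerD // normrM ler_wpM2l.
- apply: (@itv_int psi t2 t (fun _ => alpha) alpha) => //.
  + by move=> x; exact: cst_continuous.
  + by move=> x; rewrite ger0_norm.
- move=> x _.
  have cs := cos2Dsin2 (psi x).
  rewrite mulrCA [a2 * _]mulrCA -mulrDr ler_piMr //.
  have h1 := sqr_ge0 (a1 - cos (psi x)); have h2 := sqr_ge0 (a2 - sin (psi x)).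
  nra.
Qed.

Lemma exit_le (alpha Rr t2 yT2 lam c : R) psi :
  0 <= c ->
  (forall t, t2 + c < t -> Rr ^+ 2 < (obs_x alpha (Rr * sin lam) t2 psi t) ^+ 2
     + (obs_y alpha (yT2 + Rr * cos lam) t2 psi t - target_y yT2 t2 t) ^+ 2) ->
  (exit_time alpha Rr t2 yT2 lam psi <= (t2 + c)%:E)%E.
Proof.
move=> c0 H; apply/lee_addgt0Pr => e e0.
apply: ge_ereal_inf; exists (t2 + c + e)%:E; last by rewrite EFinD.
exists (t2 + c + e) => //; split; first lra.
apply: H; lra.
Qed.

Lemma exit_ge (alpha Rr t2 yT2 lam c : R) psi :
  (forall t, t2 <= t -> Rr ^+ 2 < (obs_x alpha (Rr * sin lam) t2 psi t) ^+ 2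
     + (obs_y alpha (yT2 + Rr * cos lam) t2 psi t - target_y yT2 t2 t) ^+ 2 -> c <= t) ->
  (c%:E <= exit_time alpha Rr t2 yT2 lam psi)%E.
Proof.
move=> H; apply/ereal_infP => _ [t [h1 h2] <-]; rewrite lee_fin; exact: H.
Qed.

Lemma V_le (alpha Rr t2 yT2 lam c : R) :
  (forall psi, measurable_fun `[t2, +oo[ psi ->
     (exit_time alpha Rr t2 yT2 lam psi <= (t2 + c)%:E)%E) ->
  (V alpha Rr t2 yT2 lam <= c%:E)%E.
Proof.
move=> H; apply: ub_ereal_sup => _ [psi mpsi <-].
rewrite leeBlDr // -EFinD addrC; exact: H.
Qed.

Lemma V_ge (alpha Rr t2 yT2 lam c : R) psi :
  measurable_fun `[t2, +oo[ psi ->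
  ((t2 + c)%:E <= exit_time alpha Rr t2 yT2 lam psi)%E ->
  (c%:E <= V alpha Rr t2 yT2 lam)%E.
Proof.
move=> mpsi H; apply: le_trans; last first.
  by apply: ereal_sup_ubound; exists psi.
by rewrite leeBrDr // -EFinD addrC.
Qed.

Lemma U_bound (alpha Rr t2 yT2 lam a1 a2 K : R) psi :
  0 <= alpha -> 0 < Rr -> measurable_fun `[t2, +oo[ psi ->
  a1 ^+ 2 + a2 ^+ 2 = 1 -> alpha < a2 -> 0 <= K ->
  Rr + Rr * (a1 * sin lam + a2 * cos lam) <= K * (a2 - alpha) ->
  (exit_time alpha Rr t2 yT2 lam psi <= (t2 + K)%:E)%E.
Proof.
move=> a0 R0 mpsi a12 a2a K0 hK; apply: exit_le => // t tK.
have a12' : a1 ^+ 2 + a2 ^+ 2 <= 1 by rewrite a12.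
have tt : t2 <= t by lra.
have := @factA psi t2 t alpha a1 a2 a0 a12' mpsi tt.
rewrite /obs_x /obs_y /target_y.
set X := Rintegral _ _ (fun s => alpha * cos _).
set Y := Rintegral _ _ (fun s => alpha * sin _).
move=> hA.
set r1 := Rr * sin lam + X.
set r2 := yT2 + Rr * cos lam + Y - (yT2 + (t - t2)).
rewrite ltNge; apply/negP => hin.
have hcs : (a1 * r1 + a2 * r2) ^+ 2 <= Rr ^+ 2.
  have := sqr_ge0 (a1 * r2 - a2 * r1); nra.
have hlow : - Rr <= a1 * r1 + a2 * r2 by nra.
have e : a1 * r1 + a2 * r2 = Rr * (a1 * sin lam + a2 * cos lam) + (a1 * X + a2 * Y) - a2 * (t - t2).
  rewrite /r1 /r2; ring.
nra.
Qed.

Lemma Z_bound (alpha Rr t2 yT2 lam : R) psi :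
  0 <= alpha < 1 -> 0 < Rr -> measurable_fun `[t2, +oo[ psi ->
  cos lam <= - alpha ->
  (exit_time alpha Rr t2 yT2 lam psi <= (t2 + 0)%:E)%E.
Proof.
move=> /andP[a0 a1] R0 mpsi hc; apply: exit_le => // t tK.
have tt : t2 <= t by lra.
have cs := cos2Dsin2 lam.
have hn : (- sin lam) ^+ 2 + (- cos lam) ^+ 2 <= 1 by rewrite !sqrrN addrC cs.
have h01 : (0 : R) ^+ 2 + 1 ^+ 2 <= 1 by rewrite expr0n /= add0r expr1n.
have := @factA psi t2 t alpha _ _ a0 hn mpsi tt.
have := @factA psi t2 t alpha _ _ a0 h01 mpsi tt.
rewrite /obs_x /obs_y /target_y.
set X := Rintegral _ _ (fun s => alpha * cos _).
set Y := Rintegral _ _ (fun s => alpha * sin _).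
move=> hB hA.
set r1 := Rr * sin lam + X.
set r2 := yT2 + Rr * cos lam + Y - (yT2 + (t - t2)).
have hnr : Rr <= sin lam * r1 + cos lam * r2.
  have -> : sin lam * r1 + cos lam * r2 = Rr * (cos lam ^+ 2 + sin lam ^+ 2) + (sin lam * X + cos lam * Y) - cos lam * (t - t2).
    rewrite /r1 /r2; ring.
  rewrite cs; nra.
have hy : r2 < Rr * cos lam.
  rewrite /r2; nra.
have hp : 0 < (r1 - Rr * sin lam) ^+ 2 + (r2 - Rr * cos lam) ^+ 2.
  have h2p : 0 < (Rr * cos lam - r2) * (Rr * cos lam - r2) by apply: mulr_gt0; lra.
  have := sqr_ge0 (r1 - Rr * sin lam); nra.
nra.
Qed.

Lemma L_bound (alpha Rr t2 yT2 lam ps K : R) :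
  0 <= alpha < 1 -> 0 < Rr ->
  K * (alpha ^+ 2 - 2 * alpha * sin ps + 1)
    + 2 * Rr * (sin lam * (alpha * cos ps) + cos lam * (alpha * sin ps - 1)) <= 0 ->
  ((t2 + K)%:E <= exit_time alpha Rr t2 yT2 lam (fun _ => ps))%E.
Proof.
move=> /andP[a0 a1] R0 hK; apply: exit_ge => t tt.
rewrite /obs_x /obs_y /target_y /= !Rint_cst //.
have cs := cos2Dsin2 lam.
have cp := cos2Dsin2 ps.
set tau := t - t2.
have tau0 : 0 <= tau by rewrite /tau subr_ge0.
move=> hout.
rewrite -lerBrDl -/tau.
rewrite leNgt; apply/negP => htK.
have hw : 0 <= alpha ^+ 2 - 2 * alpha * sin ps + 1.
  have -> : alpha ^+ 2 - 2 * alpha * sin ps + 1 = (alpha * cos ps) ^+ 2 + (alpha * sin ps - 1) ^+ 2.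
    have -> : (alpha * cos ps) ^+ 2 + (alpha * sin ps - 1) ^+ 2 = alpha ^+ 2 * (cos ps ^+ 2 + sin ps ^+ 2) - 2 * alpha * sin ps + 1 by ring.
    by rewrite cp mulr1.
  by rewrite addr_ge0 // sqr_ge0.
have e : (Rr * sin lam + alpha * cos ps * tau) ^+ 2
   + (yT2 + Rr * cos lam + alpha * sin ps * tau - (yT2 + tau)) ^+ 2 - Rr ^+ 2
   = tau * (2 * Rr * (sin lam * (alpha * cos ps) + cos lam * (alpha * sin ps - 1))
            + tau * (alpha ^+ 2 - 2 * alpha * sin ps + 1)).
  have -> : Rr ^+ 2 = Rr ^+ 2 * (cos lam ^+ 2 + sin lam ^+ 2) by rewrite cs mulr1.
  have -> : alpha ^+ 2 - 2 * alpha * sin ps + 1 = alpha ^+ 2 * (cos ps ^+ 2 + sin ps ^+ 2) - 2 * alpha * sin ps + 1 by rewrite cp mulr1.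
  ring.
set W := alpha ^+ 2 - 2 * alpha * sin ps + 1 in hK hw e.
set P := 2 * Rr * _ in hK e.
have h1 : P + tau * W <= 0.
  have : (tau - K) * W <= 0 by rewrite mulr_le0_ge0 // subr_le0 ltW.
  lra.
have h2 : tau * (P + tau * W) <= 0 by rewrite mulr_ge0_le0.
lra.
Qed.
Lemma alg (alpha Rr x y : R) : 0 < alpha < 1 -> 0 < Rr ->
  x ^+ 2 + y ^+ 2 = 1 -> - alpha < y ->
  let D := 1 + 2 * alpha * y + alpha ^+ 2 in
  let qx := x * (1 - alpha ^+ 2) / D in
  let qy := - (y * (1 + alpha ^+ 2) + 2 * alpha) / D in
  let K := 2 * Rr * (alpha + y) / (1 - alpha ^+ 2) in
  [/\ qx ^+ 2 + qy ^+ 2 = 1, alpha < - qy, 0 <= K,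
      Rr + Rr * (- qx * x + - qy * y) <= K * (- qy - alpha) &
      K * (alpha ^+ 2 - 2 * alpha * (- qy) + 1)
      + 2 * Rr * (x * (alpha * (- qx)) + y * (alpha * (- qy) - 1)) <= 0].
Proof.
move=> /andP[a0 a1] R0 hxy hy D qx qy K.
have D0 : 0 < D by rewrite /D; nra.
have A0 : 0 < 1 - alpha ^+ 2 by nra.
have Dn : D != 0 by rewrite gt_eqF.
have An : 1 - alpha ^+ 2 != 0 by rewrite gt_eqF.
have hx : x ^+ 2 + y ^+ 2 - 1 = 0 by rewrite hxy subrr.
split.
- have e : qx ^+ 2 + qy ^+ 2 - 1 = (1 - alpha ^+ 2) ^+ 2 / D ^+ 2 * (x ^+ 2 + y ^+ 2 - 1).
    rewrite /qx /qy /D; field; exact: Dn.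
  by apply/eqP; rewrite -subr_eq0 e hx mulr0.
- have e : - qy - alpha = (1 - alpha ^+ 2) * (y + alpha) / D.
    rewrite /qy /D; field; exact: Dn.
  rewrite -subr_gt0 e; apply: divr_gt0 => //; apply: mulr_gt0 => //; lra.
- rewrite /K; apply: divr_ge0; [nra|lra].
- have e : Rr + Rr * (- qx * x + - qy * y) - K * (- qy - alpha) = - Rr * (1 - alpha ^+ 2) / D * (x ^+ 2 + y ^+ 2 - 1).
    rewrite /qx /qy /K /D; field; apply/andP; split; [exact: Dn| exact: An].
  by rewrite -subr_le0 e hx mulr0.
- have e : K * (alpha ^+ 2 - 2 * alpha * (- qy) + 1)
      + 2 * Rr * (x * (alpha * (- qx)) + y * (alpha * (- qy) - 1)) = - 2 * Rr * alpha * (1 - alpha ^+ 2) / D * (x ^+ 2 + y ^+ 2 - 1).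
    rewrite /qx /qy /K /D; field; apply/andP; split; [exact: Dn| exact: An].
  by rewrite e hx mulr0.
Qed.

Definition vf (alpha Rr c : R) := Num.max 0 (2 * Rr * (alpha + c) / (1 - alpha ^+ 2)).

Lemma V_val (alpha Rr t2 yT2 lam : R) : 0 < alpha < 1 -> 0 < Rr ->
  V alpha Rr t2 yT2 lam = (vf alpha Rr (cos lam))%:E.
Proof.
move=> /andP[a0 a1] R0.
have a01 : 0 <= alpha < 1 by rewrite ltW.
have A0 : 0 < 1 - alpha ^+ 2 by nra.
have cs := cos2Dsin2 lam.
have hxy : sin lam ^+ 2 + cos lam ^+ 2 = 1 by rewrite addrC.
have [hc|hc] := leP (cos lam) (- alpha).
- have -> : vf alpha Rr (cos lam) = 0.
    rewrite /vf; apply/max_idPl.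
    rewrite pmulr_lle0 ?invr_gt0 //; nra.
  apply/le_anti/andP; split.
    apply: V_le => psi mpsi; exact: Z_bound.
  apply: (@V_ge _ _ _ _ _ _ (fun _ => 0)) => //.
  apply: exit_ge => t tt _; lra.
- have [q1 q2 K0 q4 q5] := @alg alpha Rr (sin lam) (cos lam) ltac:(by rewrite a0 a1) R0 hxy hc.
  set D := 1 + 2 * alpha * cos lam + alpha ^+ 2 in q1 q2 q4 q5.
  set qx := sin lam * (1 - alpha ^+ 2) / D in q1 q2 q4 q5.
  set qy := - (cos lam * (1 + alpha ^+ 2) + 2 * alpha) / D in q1 q2 q4 q5.
  set K := 2 * Rr * (alpha + cos lam) / (1 - alpha ^+ 2) in K0 q4 q5.
  have -> : vf alpha Rr (cos lam) = K by rewrite /vf; apply/max_idPr.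
  apply/le_anti/andP; split.
    apply: V_le => psi mpsi; apply: (@U_bound alpha Rr t2 yT2 lam (- qx) (- qy) K psi) => //.
    - exact: ltW.
    - by rewrite !sqrrN.
  have hq : -1 <= - qx <= 1 by apply/andP; split; nra.
  set ps := acos (- qx).
  have cps : cos ps = - qx by rewrite /ps acosK // in_itv /=.
  have sps : sin ps = - qy.
    rewrite /ps sin_acos // sqrrN.
    have -> : 1 - qx ^+ 2 = qy ^+ 2 by lra.
    rewrite sqrtr_sqr ltr0_norm //; lra.
  apply: (@V_ge _ _ _ _ _ _ (fun _ => ps)) => //.
  apply: L_bound => //; rewrite cps sps; exact: q5.
Qed.

Lemma vf_mono (alpha Rr c1 c2 : R) : 0 < alpha < 1 -> 0 < Rr -> c1 <= c2 ->
  vf alpha Rr c1 <= vf alpha Rr c2.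
Proof.
move=> /andP[a0 a1] R0 c12; rewrite /vf ge_max le_max lexx /=.
rewrite le_max; apply/orP; right.
rewrite ler_pM2r ?invr_gt0; last nra.
nra.
Qed.

Lemma cos_anti (a b : R) : 0 <= a -> a <= b -> b <= pi -> cos b <= cos a.
Proof.
move=> a0 ab bp.
have h1 : 0 <= sin ((a + b) / 2) by apply: sin_ge0_pi; apply/andP; split; lra.
have h2 : 0 <= sin ((b - a) / 2) by apply: sin_ge0_pi; apply/andP; split; lra.
have ea : cos a = cos ((a + b) / 2 - (b - a) / 2) by congr cos; field.
have eb : cos b = cos ((a + b) / 2 + (b - a) / 2) by congr cos; field.
rewrite ea eb cosD cosB.
nra.
Qed.

End Helpers.

Theorem lemma3 (R : realType) (alpha Rr : R) :
  0 < alpha < 1 -> 0 < Rr ->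
  forall t2 yT2 : R,
    {in `[- pi, 0] &, forall a b : R, a <= b ->
        (V alpha Rr t2 yT2 a <= V alpha Rr t2 yT2 b)%E} /\
    {in `[0, pi] &, forall a b : R, a <= b ->
        (V alpha Rr t2 yT2 b <= V alpha Rr t2 yT2 a)%E} /\
    (forall lam : R, lam \in `[- pi, pi] ->
        (V alpha Rr t2 yT2 lam <= V alpha Rr t2 yT2 0)%E).
Proof.
move=> ha hR t2 yT2; split; [|split].
- move=> a b; rewrite !in_itv /= => /andP[a1 a2] /andP[b1 b2] ab.
  rewrite !V_val // lee_fin; apply: vf_mono => //.
  rewrite -(cosN a) -(cosN b); apply: cos_anti; lra.
- move=> a b; rewrite !in_itv /= => /andP[a1 a2] /andP[b1 b2] ab.
  rewrite !V_val // lee_fin; apply: vf_mono => //.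
  apply: cos_anti; lra.
- move=> lam _; rewrite !V_val // lee_fin; apply: vf_mono => //.
  by rewrite cos0 cos_le1.
Qed.
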